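(* The abstraction functor $[\mathbb{A}](-)\colon\mathsf{Nom}\to\mathsf{Nom}$ has a locally monotone extension to $\mathrm{Kl}(\mathcal{P}_{\mathsf{ufs}})$.
   Context: Fix a countably infinite set $\mathbb{A}$ of names; $\mathsf{Nom}$ is the category of nominal sets (sets with an action of the group of finite permutations of $\mathbb{A}$ in which every element $x$ has a finite support; $\mathrm{supp}(x)$ is the least one, and $a$ is fresh for $x$ if $a\notin\mathrm{supp}(x)$) and equivariant maps. For a nominal set $X$, $[\mathbb{A}]X$ is the quotient of $\mathbb{A}\times X$ by the relation $(a,x)\sim(b,y)$ iff $(a\,c)\cdot x=(b\,c)\cdot y$ for some (equivalently all) fresh $c$; the class of $(a,x)$ is written $\langle a\rangle x$, and $[\mathbb{A}]f(\langle a\rangle x)=\langle a\rangle f(x)$. $\mathcal{P}_{\mathsf{ufs}}X$ is the nominal set of uniformly finitely supported subsets $A\subseteq X$ (those with $\bigcup_{x\in A}\mathrm{supp}(x)$ finite); it is a monad with unit $x\mapsto\{x\}$ and multiplication union. $\mathrm{Kl}(\mathcal{P}_{\mathsf{ufs}})$ is its Kleisli category (morphisms $X\to Y$ are equivariant maps $X\to\mathcal{P}_{\mathsf{ufs}}Y$), with $J\colon\mathsf{Nom}\to\mathrm{Kl}(\mathcal{P}_{\mathsf{ufs}})$, $J f=\{-\}\cdot f$. An extension of an endofunctor $F$ is an endofunctor $\overline{F}$ on the Kleisli category with $\overline{F}J=JF$; it is locally monotone if it is monotone on hom-sets ordered pointwise by inclusion. *)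

(* Defs.v *)
From Stdlib Require Import FunctionalExtensionality PropExtensionality ProofIrrelevance.
From mathcomp Require Import all_boot.

Set Implicit Arguments.
Unset Strict Implicit.
Unset Printing Implicit Defensive.

(* Names: the countably infinite set A is nat.                              *)

Record fperm := FPerm {
  pfun :> nat -> nat;
  pinvf : nat -> nat;
  pfunK : cancel pfun pinvf;
  pinvfK : cancel pinvf pfun;
  pfin : exists s : seq nat, forall a, a \notin s -> pfun a = a }.

Definition perm_id : fperm :=
  @FPerm id id (fun _ => erefl) (fun _ => erefl)
    (ex_intro _ [::] (fun _ _ => erefl)).

Lemma comp_fin (p q : fperm) :
  exists s : seq nat, forall a, a \notin s -> p (q a) = a.
Proof.
case: (pfin p) => sp Hp; case: (pfin q) => sq Hq.
exists (sp ++ sq) => a; rewrite mem_cat negb_or => /andP[ap aq].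
by rewrite Hq // Hp.
Qed.

Lemma comp_K (p q : fperm) :
  cancel (fun a => p (q a)) (fun a => pinvf q (pinvf p a)).
Proof. by move=> a; rewrite !pfunK. Qed.

Lemma comp_KV (p q : fperm) :
  cancel (fun a => pinvf q (pinvf p a)) (fun a => p (q a)).
Proof. by move=> a; rewrite !pinvfK. Qed.

Definition perm_comp (p q : fperm) : fperm :=
  @FPerm (fun a => p (q a)) (fun a => pinvf q (pinvf p a))
    (comp_K p q) (comp_KV p q) (comp_fin p q).

Lemma inv_fin (p : fperm) :
  exists s : seq nat, forall a, a \notin s -> pinvf p a = a.
Proof.
case: (pfin p) => s Hs; exists s => a /Hs e.
by rewrite -{1}e pfunK.
Qed.

Definition perm_inv (p : fperm) : fperm :=
  @FPerm (pinvf p) p (pinvfK p) (pfunK p) (inv_fin p).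

Definition swapf (a b : nat) (c : nat) : nat :=
  if c == a then b else if c == b then a else c.

Lemma swapfK a b : cancel (swapf a b) (swapf a b).
Proof.
move=> c; rewrite /swapf.
case: (eqVneq c a) => [->|ca].
  by rewrite eqxx; case: (eqVneq b a) => [->|ba]; rewrite ?eqxx.
case: (eqVneq c b) => [->|cb]; first by rewrite eqxx.
by rewrite (negPf ca) (negPf cb).
Qed.

Lemma swap_fin a b :
  exists s : seq nat, forall c, c \notin s -> swapf a b c = c.
Proof.
exists [:: a; b] => c; rewrite !inE negb_or => /andP[ca cb].
by rewrite /swapf (negPf ca) (negPf cb).
Qed.

Definition swap (a b : nat) : fperm :=
  @FPerm (swapf a b) (swapf a b) (swapfK a b) (swapfK a b) (swap_fin a b).

Definition supports (X : Type) (act : fperm -> X -> X) (S : seq nat) (x : X) :=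
  forall p : fperm, (forall a, a \in S -> p a = a) -> act p x = x.

Record nominal := Nominal {
  carrier :> Type;
  act : fperm -> carrier -> carrier;
  act_ext : forall (p q : fperm) x, (forall a, p a = q a) -> act p x = act q x;
  act_id : forall x, act perm_id x = x;
  act_comp : forall p q x, act (perm_comp p q) x = act p (act q x);
  act_fs : forall x, exists S : seq nat, supports act S x }.

Arguments act {n}.

(* a is fresh for x, i.e. a is not in the least support supp(x)
   (equivalently: some finite support of x avoids a) *)
Definition fresh (X : nominal) (a : nat) (x : X) :=
  exists S : seq nat, supports (@act X) S x /\ a \notin S.

Definition equivariant (X Y : nominal) (f : X -> Y) :=
  forall (p : fperm) (x : X), f (act p x) = act p (f x).

Lemma act_invK (X : nominal) (p : fperm) (x : X) :
  act (perm_inv p) (act p x) = x.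
Proof.
rewrite -act_comp -[RHS]act_id; apply: act_ext => a /=; exact: pfunK.
Qed.

Lemma act_Kinv (X : nominal) (p : fperm) (x : X) :
  act p (act (perm_inv p) x) = x.
Proof.
rewrite -act_comp -[RHS]act_id; apply: act_ext => a /=; exact: pinvfK.
Qed.

Lemma supports_act (X : nominal) (p : fperm) S (x : X) :
  supports (@act X) S x -> supports (@act X) (map p S) (act p x).
Proof.
move=> HS q Hq.
have Hr : act (perm_comp (perm_inv p) (perm_comp q p)) x = x.
  apply: HS => a aS /=.
  by rewrite Hq ?pfunK // map_f.
rewrite -{2}Hr -!act_comp; apply: act_ext => a /=.
by rewrite pinvfK.
Qed.

Lemma fresh_act (X : nominal) (p : fperm) c (x : X) :
  fresh c x -> fresh (p c) (act p x).
Proof.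
case=> S [HS cS]; exists (map p S); split; first exact: supports_act.
by rewrite mem_map //; apply: (can_inj (pfunK p)).
Qed.

Definition absrel (X : nominal) (u v : nat * X) : Prop :=
  exists c : nat, [/\ c != u.1, c != v.1, fresh c u.2, fresh c v.2 &
    act (swap u.1 c) u.2 = act (swap v.1 c) v.2].

Lemma swap_conj (X : nominal) (p : fperm) a c (x : X) :
  act p (act (swap a c) x) = act (swap (p a) (p c)) (act p x).
Proof.
rewrite -!act_comp; apply: act_ext => z /=.
rewrite /swapf !(inj_eq (can_inj (pfunK p))).
by case: (z == a); case: (z == c).
Qed.

Lemma absrel_act (X : nominal) (p : fperm) (u v : nat * X) :
  absrel u v -> absrel (p u.1, act p u.2) (p v.1, act p v.2).
Proof.
case: u v => a x [b y] [c /= [ca cb fx fy e]].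
have pinj := can_inj (pfunK p).
exists (p c); split => /=.
- by rewrite (inj_eq pinj).
- by rewrite (inj_eq pinj).
- exact: fresh_act.
- exact: fresh_act.
by rewrite -!swap_conj e.
Qed.

Lemma absrel_actE (X : nominal) (p : fperm) (u v : nat * X) :
  absrel (p u.1, act p u.2) v <->
  absrel u (perm_inv p v.1, act (perm_inv p) v.2).
Proof.
split=> H.
  have := absrel_act (perm_inv p) H.
  by rewrite /= pfunK act_invK; case: u {H}.
have := absrel_act p H.
by rewrite /= pinvfK act_Kinv; case: v {H}.
Qed.

Definition abs_carrier (X : nominal) :=
  {P : nat * X -> Prop | exists a (x : X), forall q, P q <-> absrel (a, x) q}.

Lemma abs_act_class (X : nominal) (p : fperm) (P : abs_carrier X) :
  exists a (x : X), forall q,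
    sval P (perm_inv p q.1, act (perm_inv p) q.2) <-> absrel (a, x) q.
Proof.
case: P => P [a [x HP]] /=; exists (p a), (act p x) => q.
rewrite HP; split => H.
  by apply/(absrel_actE p (a, x) q).
by apply/(absrel_actE p (a, x) q).
Qed.

Definition abs_act (X : nominal) (p : fperm) (P : abs_carrier X) : abs_carrier X :=
  exist _ (fun q => sval P (perm_inv p q.1, act (perm_inv p) q.2))
    (abs_act_class p P).

Lemma abs_eq (X : nominal) (P Q : abs_carrier X) : sval P = sval Q -> P = Q.
Proof.
case: P Q => P HP [Q HQ] /= e; subst Q; f_equal; apply: proof_irrelevance.
Qed.

Lemma inv_ext (p q : fperm) : (forall a, p a = q a) ->
  forall a, pinvf p a = pinvf q a.
Proof.
move=> H a; apply: (can_inj (pfunK p)).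
by rewrite pinvfK H pinvfK.
Qed.

Lemma abs_act_ext (X : nominal) (p q : fperm) (P : abs_carrier X) :
  (forall a, p a = q a) -> abs_act p P = abs_act q P.
Proof.
move=> H; apply: abs_eq; apply: functional_extensionality => -[b y] /=.
have Hi := inv_ext H.
by rewrite Hi (@act_ext X (perm_inv p) (perm_inv q)).
Qed.

Lemma abs_act_id (X : nominal) (P : abs_carrier X) : abs_act perm_id P = P.
Proof.
apply: abs_eq; apply: functional_extensionality => -[b y] /=.
by rewrite (@act_ext X (perm_inv perm_id) perm_id) // act_id.
Qed.

Lemma abs_act_comp (X : nominal) (p q : fperm) (P : abs_carrier X) :
  abs_act (perm_comp p q) P = abs_act p (abs_act q P).
Proof.
apply: abs_eq; apply: functional_extensionality => -[b y] /=.
rewrite -act_comp.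
by rewrite (@act_ext X (perm_inv (perm_comp p q))
                       (perm_comp (perm_inv q) (perm_inv p))).
Qed.

Lemma abs_act_fs (X : nominal) (P : abs_carrier X) :
  exists S : seq nat, supports (@abs_act X) S P.
Proof.
case: P => P [a [x HP]].
case: (act_fs x) => S HS; exists (a :: S) => p Hp.
apply: abs_eq; apply: functional_extensionality => -[b y] /=.
apply: propositional_extensionality.
rewrite HP -(absrel_actE p (a, x) (b, y)) /=.
rewrite Hp ?mem_head // HS; last by move=> c cS; apply: Hp; rewrite inE cS orbT.
by rewrite HP.
Qed.

Definition Abs (X : nominal) : nominal :=
  @Nominal (abs_carrier X) (@abs_act X) (@abs_act_ext X) (@abs_act_id X)
    (@abs_act_comp X) (@abs_act_fs X).

Definition abs (X : nominal) (a : nat) (x : X) : Abs X :=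
  exist _ (absrel (a, x)) (ex_intro _ a (ex_intro _ x (fun q => iff_refl _))).

(* A map X -> P_ufs Y is represented by the relation f x y := (y \in f x).
   klmor f: f is an equivariant map X -> P_ufs Y, i.e.
   - each f x is uniformly finitely supported (the union of the supports of
     its elements is contained in a finite set S), and
   - f (p.x) = p.(f x) for the pointwise action on subsets. *)
Definition klmor (X Y : nominal) (f : X -> Y -> Prop) : Prop :=
  (forall x : X, exists S : seq nat, forall y, f x y -> supports (@act Y) S y) /\
  (forall (p : fperm) (x : X) (y : Y), f (act p x) y <-> f x (act (perm_inv p) y)).

Definition kl_id (X : nominal) : X -> X -> Prop := fun x y => y = x.

Definition kl_comp (X Y Z : nominal) (f : X -> Y -> Prop) (g : Y -> Z -> Prop)
  : X -> Z -> Prop := fun x z => exists y, f x y /\ g y z.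

Definition klJ (X Y : nominal) (f : X -> Y) : X -> Y -> Prop :=
  fun x y => y = f x.

Definition klJAbs (X Y : nominal) (f : X -> Y) : Abs X -> Abs Y -> Prop :=
  fun P Q => exists (a : nat) (x : X), P = abs a x /\ Q = abs a (f x).

(* Main.v *)
From Stdlib Require Import FunctionalExtensionality PropExtensionality ProofIrrelevance.
Require Import Defs.
From mathcomp Require Import all_boot.
Set Implicit Arguments. Unset Strict Implicit.

Ltac swap_step :=
  match goal with
  | H : is_true (?x != ?x) |- _ => by rewrite eqxx in H
  | |- context[?x == ?x] => rewrite eqxx
  | |- context[?x == ?y] =>
      is_var x; is_var y;
      let H := fresh in
      case: (eqVneq x y) => [H|H]; [subst x | rewrite ?(negbTE H) ?(negbTE (negbT (contra_neq (fun e => esym e) H)))]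
  end.
Ltac swap_tac := rewrite /swapf; repeat swap_step; try done.

Lemma fresh_name (s : seq nat) : exists c, c \notin s.
Proof.
have H : forall n, n \in s -> n <= foldr maxn 0 s.
  elim: s => //= a s IH n; rewrite inE => /orP[/eqP->|/IH]; first exact: leq_maxl.
  move=> h; apply: leq_trans h (leq_maxr _ _).
exists (foldr maxn 0 s).+1; apply/negP => /H; by rewrite ltnn.
Qed.

Lemma swap_inv (X : nominal) a b (x : X) : act (swap a b) (act (swap a b) x) = x.
Proof.
rewrite -act_comp -[RHS]act_id; apply: act_ext => z /=; exact: swapfK.
Qed.

Lemma swap_same (X : nominal) a (x : X) : act (swap a a) x = x.
Proof.
rewrite -[RHS]act_id; apply: act_ext => z /=; rewrite /swapf; by case: eqP.
Qed.

Lemma swap_fix_supp (X : nominal) S c d (x : X) : supports (@act X) S x ->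
  c \notin S -> d \notin S -> act (swap c d) x = x.
Proof.
move=> HS cS dS; apply: HS => a aS /=; rewrite /swapf.
have -> : (a == c) = false by apply/eqP => e; move: cS; rewrite -e aS.
have -> : (a == d) = false by apply/eqP => e; move: dS; rewrite -e aS.
done.
Qed.

Lemma swap_fix (X : nominal) c e (x : X) : fresh c x -> fresh e x ->
  act (swap c e) x = x.
Proof.
case=> S1 [H1 c1] [S2 [H2 e2]].
case: (eqVneq c e) => [<-|ce]; first exact: swap_same.
case: (fresh_name (S1 ++ S2 ++ [:: c; e])) => d.
rewrite !mem_cat !inE !negb_or => /and3P[d1 d2 /andP[dc de]].
rewrite -{2}(swap_fix_supp H1 c1 d1) -{2}(swap_fix_supp H2 e2 d2) -{2}(swap_fix_supp H1 c1 d1).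
rewrite -!act_comp; apply: act_ext => z /=; swap_tac.
Qed.

Lemma absrel_all (X : nominal) a b e (x y : X) : absrel (a, x) (b, y) ->
  e != a -> e != b -> fresh e x -> fresh e y ->
  act (swap a e) x = act (swap b e) y.
Proof.
case=> c /= [ca cb fcx fcy E] ea eb fex fey.
case: (eqVneq e c) => [->//|ec].
rewrite -(swap_fix fcx fex) -[in RHS](swap_fix fcy fey).
have H1 : forall (w : X) a, a != c -> a != e ->
   act (swap a e) (act (swap c e) w) = act (swap c e) (act (swap a c) w).
  move=> w a' a'c a'e; rewrite -!act_comp; apply: act_ext => z /=.
  move: ec; swap_tac.
by rewrite H1 ?E -?H1 // eq_sym.
Qed.

Lemma fresh_ex (X : nominal) (x : X) (s : seq nat) : exists c, c \notin s /\ fresh c x.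
Proof.
case: (act_fs x) => S HS; case: (fresh_name (s ++ S)) => c.
rewrite mem_cat negb_or => /andP[c1 c2]; exists c; split => //; by exists S.
Qed.

Lemma absrel_refl (X : nominal) a (x : X) : absrel (a, x) (a, x).
Proof.
case: (fresh_ex x [:: a]) => c []; rewrite inE => ca fc.
by exists c; split.
Qed.

Lemma absrel_sym (X : nominal) (u v : nat * X) : absrel u v -> absrel v u.
Proof. by case=> c [? ? ? ? ?]; exists c; split. Qed.

Lemma absrel_trans (X : nominal) (u v w : nat * X) :
  absrel u v -> absrel v w -> absrel u w.
Proof.
case: u v w => a x [b y] [d z] H1 H2.
case: (act_fs x) => Sx Hx; case: (act_fs y) => Sy Hy; case: (act_fs z) => Sz Hz.
case: (fresh_name (Sx ++ Sy ++ Sz ++ [:: a; b; d])) => e.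
rewrite !mem_cat !inE !negb_or => /and4P[ex ey ez /and3P[ea eb ed]].
have fx : fresh e x by exists Sx.
have fy : fresh e y by exists Sy.
have fz : fresh e z by exists Sz.
exists e; split => //=.
by rewrite (absrel_all H1) // (absrel_all H2).
Qed.

Lemma abs_eqP (X : nominal) a b (x y : X) :
  absrel (a, x) (b, y) <-> abs a x = abs b y.
Proof.
split => [H|E].
  apply: abs_eq => /=; apply: functional_extensionality => q.
  apply: propositional_extensionality; split => H'.
    exact: absrel_trans (absrel_sym H) H'.
  exact: absrel_trans H H'.
have := f_equal (fun P : Abs X => sval P (b, y)) E => /= ->.
exact: absrel_refl.
Qed.

Lemma abs_rep (X : nominal) (P : Abs X) : exists a x, P = abs a x.
Proof.
case: P => P [a [x HP]]; exists a, x; apply: abs_eq => /=.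
apply: functional_extensionality => q; apply: propositional_extensionality; exact: HP.
Qed.

Lemma act_abs (X : nominal) p a (x : X) : act p (abs a x) = abs (p a) (act p x).
Proof.
apply: abs_eq => /=; apply: functional_extensionality => q.
apply: propositional_extensionality; split => H.
  by apply/(absrel_actE p (a, x) q).
by apply/(absrel_actE p (a, x) q).
Qed.

Lemma supports_abs (X : nominal) S a (y : X) : supports (@act X) S y ->
  supports (@act (Abs X)) (a :: S) (abs a y).
Proof.
move=> HS p Hp; rewrite act_abs Hp ?mem_head // HS //.
by move=> c cS; apply: Hp; rewrite inE cS orbT.
Qed.

Lemma kl_equiv (X Y : nominal) (f : X -> Y -> Prop) p x y : klmor f ->
  f x y -> f (act p x) (act p y).
Proof. by case=> _ H fxy; apply/H; rewrite act_invK. Qed.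

Lemma kl_fresh (X Y : nominal) (f : X -> Y -> Prop) S x y c : klmor f ->
  f x y -> supports (@act X) S x -> c \notin S -> fresh c y.
Proof.
move=> kf fxy HS cS.
case: (kf) => [/(_ x) [U HU] _].
case: (boolP (c \in U)) => cU; last by exists U; split => //; apply: HU.
case: (fresh_name (U ++ S ++ [:: c])) => b.
rewrite !mem_cat !inE !negb_or => /and3P[bU bS bc].
have := kl_equiv (swap c b) kf fxy; rewrite (swap_fix_supp HS cS bS) => /HU Hs.
exists (map (swap c b) U); split.
  by rewrite -[y](swap_inv c b); apply: supports_act.
apply/mapP => -[u uU] /= E.
have : swapf c b c = swapf c b (swapf c b u) by rewrite -E.
rewrite swapfK /swapf eqxx => Eb; by move: bU; rewrite Eb uU.
Qed.

Lemma key_core (X Y : nominal) (f : X -> Y -> Prop) a b x x' y : klmor f ->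
  f x y -> absrel (a, x) (b, x') -> exists y', f x' y' /\ abs a y = abs b y'.
Proof.
move=> kf fxy [c /= [ca cb [Sx [HSx cSx]] [Sx' [HSx' cSx']] E]].
exists (act (swap b c) (act (swap a c) y)).
have fx'y' : f x' (act (swap b c) (act (swap a c) y)).
  rewrite -[x'](swap_inv b c) -E; do 2 apply: kl_equiv => //.
split => //; apply/abs_eqP; exists c; split => //=.
- exact: kl_fresh kf fxy HSx cSx.
- exact: kl_fresh kf fx'y' HSx' cSx'.
by rewrite swap_inv.
Qed.

Definition ext (X Y : nominal) (f : X -> Y -> Prop) (u : Abs X) (v : Abs Y) : Prop :=
  exists a x y, u = abs a x /\ v = abs a y /\ f x y.

Lemma ext_rep (X Y : nominal) (f : X -> Y -> Prop) a x v : klmor f ->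
  ext f (abs a x) v -> exists y, f x y /\ v = abs a y.
Proof.
move=> kf [a' [x' [y' [E [-> fxy]]]]].
have /abs_eqP H := esym E.
case: (key_core kf fxy H) => y [fy Ey]; by exists y.
Qed.
Theorem proposition3p11 :
  exists ext : forall X Y : nominal,
      (X -> Y -> Prop) -> (Abs X -> Abs Y -> Prop),
    ((* ext sends Kleisli morphisms X -> Y to Kleisli morphisms [A]X -> [A]Y *)
        (forall (X Y : nominal) (f : X -> Y -> Prop),
            klmor f -> klmor (ext X Y f)) /\
        (* ext is well defined on morphisms (which are equal iff extensionally equal) *)
        (forall (X Y : nominal) (f g : X -> Y -> Prop), klmor f -> klmor g ->
            (forall x y, f x y <-> g x y) ->
            forall u v, ext X Y f u v <-> ext X Y g u v) /\
        (* functoriality: identities *)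
        (forall (X : nominal) (u v : Abs X),
            ext X X (@kl_id X) u v <-> @kl_id (Abs X) u v) /\
        (* functoriality: composition *)
        (forall (X Y Z : nominal) (f : X -> Y -> Prop) (g : Y -> Z -> Prop),
            klmor f -> klmor g ->
            forall u w, ext X Z (kl_comp f g) u w <->
                        kl_comp (ext X Y f) (ext Y Z g) u w) /\
        (* extension: Fbar (J f) = J ([A] f) *)
        (forall (X Y : nominal) (f : X -> Y), equivariant f ->
            forall u v, ext X Y (klJ f) u v <-> klJAbs f u v) /\
      (* local monotonicity *)
        (forall (X Y : nominal) (f g : X -> Y -> Prop), klmor f -> klmor g ->
            (forall x y, f x y -> g x y) ->
            forall u v, ext X Y f u v -> ext X Y g u v)).
Proof.
exists ext; split; [|split; [|split; [|split; [|split]]]].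
- move=> X Y f kf; split.
    move=> u; case: (abs_rep u) => a [x ->].
    case: (kf) => [/(_ x) [U HU] _]; exists (a :: U) => v /(ext_rep kf) [y [fy ->]].
    exact/supports_abs/HU.
  move=> p u v; split.
    case=> a' [x' [y' [E [-> fxy]]]].
    exists (perm_inv p a'), (act (perm_inv p) x'), (act (perm_inv p) y'); split.
      by rewrite -act_abs -E act_invK.
    split; first by rewrite act_abs.
    exact: kl_equiv.
  case=> a [x [y [-> [E fxy]]]].
  exists (p a), (act p x), (act p y); split; first by rewrite act_abs.
  split; last exact: kl_equiv.
  by rewrite -act_abs -E act_Kinv.
- move=> X Y f g _ _ H u v; split; case=> a [x [y [E1 [E2 fxy]]]];
    exists a, x, y; do 2 split => //; exact/H.
- move=> X u v; split.
    by case=> a [x [y [-> [-> ->]]]].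
  move=> ->; case: (abs_rep u) => a [x ->]; by exists a, x, x.
- move=> X Y Z f g kf kg u w; split.
    case=> a [x [z [-> [-> [y [fxy gyz]]]]]].
    exists (abs a y); split; [exists a, x, y | exists a, y, z]; by [].
  case=> v [[a [x [y [-> [-> fxy]]]]] /(ext_rep kg) [z [gyz ->]]].
  exists a, x, z; do 2 split => //; by exists y.
- move=> X Y f _ u v; split.
    by case=> a [x [y [-> [-> ->]]]]; exists a, x.
  by case=> a [x [-> ->]]; exists a, x, (f x).
- move=> X Y f g _ _ H u v [a [x [y [E1 [E2 fxy]]]]].
  exists a, x, y; do 2 split => //; exact: H.
Qed.
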